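(* Let $G$ be a special linear or symplectic algebraic group over an algebraically closed field, with natural module $V$ of dimension $n$. Let $C_1,\dots,C_e$ be conjugacy classes of $G$, $\Omega=C_1\times\dots\times C_e$, and let $\gamma_j$ be the dimension of the largest eigenspace on $V$ of an element of $C_j$. Then $\sum_{j=1}^e\gamma_j\leq n(e-1)$ if and only if there is a tuple $(x_1,\dots,x_e)\in\Omega$ such that no $1$-dimensional subspace of $V$ is fixed by all of $x_1,\dots,x_e$. *)

(* Defs.v *)
From HB Require Import structures.
From mathcomp Require Import all_boot all_order all_algebra.
Set Implicit Arguments. Unset Strict Implicit. Unset Printing Implicit Defensive.
Import GRing.Theory.
Local Open Scope ring_scope.

Section Defs.
Variable (k : fieldType) (n : nat).

(* dimension of the lambda-eigenspace of x on V = k^n (column vectors),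
   i.e. dim ker (x - lambda I) *)
Definition eigdim (x : 'M[k]_n) (lam : k) : nat := subn n (\rank (x - lam%:M)%R).

Definition largest_eigdim (x : 'M[k]_n) (g : nat) : Prop :=
  (exists lam, eigdim x lam = g) /\ (forall lam, (eigdim x lam <= g)%N).

Definition SL_group : 'M[k]_n -> Prop := fun g => \det g = 1.

Definition symplectic_form (J : 'M[k]_n) : Prop :=
  J \in unitmx /\ forall v : 'cV[k]_n, v^T *m J *m v = 0.

Definition Sp_group (J : 'M[k]_n) : 'M[k]_n -> Prop :=
  fun g => g^T *m J *m g = J.

Definition SL_or_Sp (G : 'M[k]_n -> Prop) : Prop :=
  (forall g, G g <-> SL_group g) \/
  (exists J, symplectic_form J /\ forall g, G g <-> Sp_group J g).

Definition conj_in (G : 'M[k]_n -> Prop) (x y : 'M[k]_n) : Prop :=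
  exists g, G g /\ y = g *m x *m invmx g.

Definition fixes_line (x : 'M[k]_n) (v : 'cV[k]_n) : Prop :=
  exists lam : k, x *m v = lam *: v.

End Defs.

(* Main.v *)
Require Import Defs.
From HB Require Import structures.
From mathcomp Require Import all_boot all_order all_algebra.
From mathcomp Require Import zify.
Import GRing.Theory.
Local Open Scope ring_scope.
Set Implicit Arguments. Unset Strict Implicit.

Lemma det_transv (k : fieldType) n (u : 'cV[k]_n) (v : 'rV[k]_n) :
  v *m u = 0 -> \det (1%:M + u *m v) = 1.
Proof.
move=> vu0.
have E1 : block_mx (1%:M + u *m v) (- u) 0 (1%:M : 'M_1) *m block_mx 1%:M 0 v 1%:M
   = block_mx 1%:M (- u) v 1%:M.
  rewrite mulmx_block ?mulmx1 ?mul1mx ?mulmx0 ?mul0mx ?addr0 ?add0r.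
  by rewrite mulNmx addrK.
have E2 : block_mx 1%:M 0 v (1%:M : 'M_1) *m block_mx 1%:M (- u) 0 (1%:M + v *m u)
   = block_mx 1%:M (- u) v 1%:M.
  rewrite mulmx_block ?mulmx1 ?mul1mx ?mulmx0 ?mul0mx ?addr0 ?add0r.
  by rewrite vu0 mulmxN vu0 oppr0 add0r addr0.
have := congr1 determinant (etrans E1 (esym E2)).
rewrite !det_mulmx !det_ublock !det_lblock !det1 vu0 addr0 det1.
by rewrite !mulr1 ?mul1r => ->.
Qed.

Lemma entry_delta (k : fieldType) n (J : 'M[k]_n) (a b : 'I_n) :
  ((delta_mx a (0 : 'I_1) : 'cV[k]_n)^T *m J *m (delta_mx b (0 : 'I_1) : 'cV[k]_n)) 0 0 = J a b.
Proof. by rewrite trmx_delta -rowE -colE !mxE. Qed.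

Lemma entry_delta' (k : fieldType) n (J : 'M[k]_n) (a b : 'I_n) :
  ((delta_mx a (0 : 'I_1) : 'cV[k]_n)^T *m J *m (delta_mx b (0 : 'I_1) : 'cV[k]_n)) = (J a b)%:M.
Proof. by rewrite {1}[LHS]mx11_scalar entry_delta. Qed.

Lemma alt_skew (k : fieldType) n (J : 'M[k]_n) :
  (forall v : 'cV[k]_n, v^T *m J *m v = 0) -> J^T = - J.
Proof.
move=> H; apply/matrixP => i j; rewrite !mxE.
have := H (delta_mx i 0 + delta_mx j 0).
rewrite mulmxDr [(_ + _)^T]linearD /= !mulmxDl !entry_delta'.
have := H (delta_mx i 0); have := H (delta_mx j 0).
rewrite !entry_delta' => -> ->; rewrite add0r addr0 -raddfD /=.
move/(congr1 (fun M : 'M_1 => M 0 0)); rewrite !mxE eqxx mulr1n.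
by move/eqP; rewrite addr_eq0 => /eqP.
Qed.
Lemma subB_sub (k : fieldType) m1 m2 n (A B : 'M[k]_(m1, n)) (C : 'M_(m2, n)) :
  (A <= C)%MS -> (B <= C)%MS -> ((A - B)%R <= C)%MS.
Proof.
move=> AC BC; apply: addmx_sub => //; rewrite -scaleN1r; exact: scalemx_sub.
Qed.

Lemma avoid2 (k : fieldType) m n (A : 'M[k]_(m, n)) m1 m2 (B1 : 'M_(m1, n)) (B2 : 'M_(m2, n)) :
  ~~ (A <= B1)%MS -> ~~ (A <= B2)%MS ->
  exists v : 'rV_n, [/\ (v <= A)%MS, ~~ (v <= B1)%MS & ~~ (v <= B2)%MS].
Proof.
case/row_subPn => i H1; case/row_subPn => j H2.
have [v1B2|v1B2] := boolP (row i A <= B2)%MS; last by exists (row i A); rewrite row_sub.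
have [v2B1|v2B1] := boolP (row j A <= B1)%MS; last by exists (row j A); rewrite row_sub.
exists (row i A + row j A); split.
- by apply: addmx_sub; apply: row_sub.
- apply: contra H1 => H; rewrite -(addrK (row j A) (row i A)); exact: subB_sub.
- apply: contra H2 => H; rewrite -(addKr (row i A) (row j A)) addrC.
  by apply: addmx_sub => //; rewrite -scaleN1r; exact: scalemx_sub.
Qed.

Lemma nz_entry (k : fieldType) n (x : 'rV[k]_n) : x != 0 -> exists i, x 0 i != 0.
Proof.
move=> x0; apply/existsP; apply: contraR x0 => /existsPn H.
apply/eqP/matrixP => a b; rewrite ord1 mxE; apply/eqP; move: (H b); exact: negbNE.
Qed.

Definition transv_ok {k : fieldType} {n} (G : 'M[k]_n -> Prop) :=
  forall (S : 'M[k]_n) (x : 'rV[k]_n), x != 0 -> (x <= S)%MS -> (\rank S < n)%N ->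
  exists p q : 'rV[k]_n, [/\ p *m q^T = 0, x *m p^T != 0, ~~ (q <= S)%MS &
     forall t, G (1%:M + t *: (q^T *m p))].

Lemma SL_transv (k : fieldType) n : transv_ok (@SL_group k n).
Proof.
move=> S x x0 xS rS.
have [i xi] := nz_entry x0.
set p : 'rV[k]_n := delta_mx 0 i.
have xp : (x *m p^T) 0 0 = x 0 i by rewrite trmx_delta -colE mxE.
have xp0 : x *m p^T != 0 by apply: contraNneq xi => E; rewrite -xp E mxE.
have p0 : p != 0 by apply/eqP => /matrixP /(_ 0 i); rewrite !mxE !eqxx /= => /eqP; rewrite oner_eq0.
set H := kermx p^T.
have rH : \rank H = n.-1 by rewrite mxrank_ker mxrank_tr rank_rV p0 subn1.
have nHS : ~~ (H <= S)%MS.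
  apply/negP => HS; have := (mxrank_leqif_sup HS).2.
  have -> : \rank H = \rank S by have := mxrankS HS; rewrite rH; lia.
  rewrite eqxx => /esym SH.
  have : (x <= H)%MS := submx_trans xS SH.
  by move/sub_kermxP => E; rewrite E eqxx in xp0.
case/row_subPn: nHS => j qS.
set q := row j H.
have qp : q *m p^T = 0 by apply/sub_kermxP; exact: row_sub.
exists p, q; split => //.
- by rewrite -[p *m q^T]trmxK trmx_mul !trmxK qp trmx0.
- move=> t; rewrite /SL_group scalemxAl; apply: det_transv.
  by rewrite -scalemxAr -[p *m q^T]trmxK trmx_mul !trmxK qp trmx0 scaler0.
Qed.

Lemma Sp_transv (k : fieldType) n (J : 'M[k]_n) : symplectic_form J -> transv_ok (Sp_group J).
Proof.
case=> Ju Jalt S x x0 xS rS.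
have Jsk := alt_skew Jalt.
set K := kermx (J *m x^T).
have nS : ~~ (1%:M <= S)%MS.
  by apply/negP => /mxrankS; rewrite mxrank1; lia.
have nK : ~~ ((1%:M : 'M_n) <= K)%MS.
  apply/negP => /sub_kermxP; rewrite mul1mx => E.
  move: x0; rewrite -[x]trmxK -(mulKmx Ju x^T) E mulmx0 trmx0 eqxx //.
have [q [_ qS qK]] := avoid2 nS nK.
exists (q *m J), q; split => //.
- by have := Jalt q^T; rewrite trmxK.
- apply: contra qK => /eqP E; apply/sub_kermxP.
  apply: trmx_inj; rewrite trmx0 !trmx_mul trmxK -mulmxA; by rewrite trmx_mul in E.
- move=> t; rewrite /Sp_group.
  have qJq : q *m J *m q^T = 0 by have := Jalt q^T; rewrite trmxK.
  rewrite [(_ + _)^T]linearD /= trmx1 [(_ *: _)^T]linearZ /= !trmx_mul trmxK Jsk.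
  rewrite !mulmxDl !mulmxDr !mul1mx !mulmx1 -!scalemxAl -!scalemxAr !scalerA ?mulNmx ?mulmxN !mulmxA.
  have e : J *m q^T *m q *m J *m q^T *m q *m J = 0.
    by rewrite -!mulmxA (mulmxA q J) (mulmxA (q *m J)) qJq !mul0mx !mulmx0.
  by rewrite e oppr0 scaler0 addr0 scalerN addrK.
Qed.

Lemma G_facts (k : fieldType) n (G : 'M[k]_n -> Prop) : SL_or_Sp G ->
  [/\ G 1%:M, (forall a b, G a -> G b -> G (a *m b)), (forall a, G a -> a \in unitmx)
    & transv_ok G].
Proof.
case=> [HG | [J [HJ HG]]].
  split.
  - by apply/HG; rewrite /SL_group det1.
  - by move=> a b /HG Ha /HG Hb; apply/HG; rewrite /SL_group det_mulmx Ha Hb mulr1.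
  - by move=> a /HG Ha; rewrite unitmxE Ha unitr1.
  - move=> S x x0 xS rS; have [p [q [H1 H2 H3 H4]]] := SL_transv x0 xS rS.
    by exists p, q; split => // t; apply/HG.
split.
- by apply/HG; rewrite /Sp_group trmx1 mul1mx mulmx1.
- move=> a b /HG Ha /HG Hb; apply/HG; rewrite /Sp_group trmx_mul.
  by rewrite !mulmxA -(mulmxA b^T a^T J) -(mulmxA b^T (a^T *m J) a) Ha.
- move=> a /HG Ha; rewrite unitmxE unitfE.
  have := congr1 determinant Ha; rewrite !det_mulmx det_tr.
  have : \det J != 0 by rewrite -unitfE -unitmxE; case: HJ.
  move=> dJ E; apply/eqP => d0; move: E; rewrite d0 !(mul0r, mulr0) => E; by rewrite -E eqxx in dJ.
- move=> S x x0 xS rS; have [p [q [H1 H2 H3 H4]]] := Sp_transv HJ x0 xS rS.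
  by exists p, q; split => // t; apply/HG.
Qed.

Lemma rank_witness (k : fieldType) m1 n1 (M : 'M[k]_(m1, n1)) :
  exists P : 'M_(\rank M, m1), exists Q : 'M_(n1, \rank M), \det (P *m M *m Q) != 0.
Proof.
have E := mulmx_ebase M.
have Cu := col_ebase_unit M; have Ru := row_ebase_unit M.
move: (col_ebase M) (row_ebase M) Cu Ru E.
set r := \rank M => C R Cu Ru E.
have r1 : (r <= m1)%N by rewrite /r rank_leq_row.
have r2 : (r <= n1)%N by rewrite /r rank_leq_col.
exists (pid_mx r *m invmx C), (invmx R *m pid_mx r).
rewrite -E !mulmxA mulmxKV // mulmxK // pid_mx_id // pid_mx_id //.
by rewrite pid_mx_1 det1 oner_neq0.
Qed.

Lemma rank_lsc (k : fieldType) m1 n1 (A0 B0 : 'M[k]_(m1, n1)) (t1 : k) :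
  exists D : {poly k}, D != 0 /\
    forall t, D.[t] != 0 -> (\rank (A0 + t1 *: B0)%R <= \rank (A0 + t *: B0)%R)%N.
Proof.
have [P [Q dPQ]] := rank_witness (A0 + t1 *: B0).
set D := \det (map_mx polyC P *m (map_mx polyC A0 + 'X *: map_mx polyC B0) *m map_mx polyC Q).
have DE : forall t, D.[t] = \det (P *m (A0 + t *: B0) *m Q).
  move=> t; rewrite -horner_evalE /D -det_map_mx !map_mxM.
  congr (\det (_ *m _ *m _)); apply/matrixP => i j; rewrite !mxE /= ?horner_evalE.
  - by rewrite hornerC.
  - by rewrite hornerD hornerM hornerX !hornerC.
  - by rewrite hornerC.
exists D; split.
  by apply: contraNneq dPQ => D0; rewrite -DE D0 horner0.
move=> t; rewrite DE => dt.
have : \rank (P *m (A0 + t *: B0) *m Q) = \rank (A0 + t1 *: B0)%R.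
  by rewrite mxrank_unit ?unitmxE ?unitfE.
move=> <-; apply: leq_trans (mxrankM_maxl _ _) _; exact: mxrankM_maxr.
Qed.

Lemma poly_avoid (k : closedFieldType) (I : eqType) (L : seq I) (Pr : I -> k -> Prop) :
  (forall i, i \in L -> exists D : {poly k}, D != 0 /\ forall t, D.[t] != 0 -> Pr i t) ->
  exists t, forall i, i \in L -> Pr i t.
Proof.
move=> H.
have [D [D0 HD]] : exists D : {poly k}, D != 0 /\ forall t, D.[t] != 0 -> forall i, i \in L -> Pr i t.
  elim: L H => [|a L IH] H.
    by exists 1; split => [|t _ i]; rewrite ?oner_neq0 ?in_nil.
  have [Da [Da0 HDa]] := H a (mem_head _ _).
  have [Dr [Dr0 HDr]] : exists D : {poly k}, D != 0 /\ forall t, D.[t] != 0 -> forall i, i \in L -> Pr i t.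
    by apply: IH => i iL; apply: H; rewrite in_cons iL orbT.
  exists (Da * Dr); split; first by rewrite mulf_neq0.
  move=> t; rewrite hornerM mulf_eq0 negb_or => /andP [ta tr] i.
  by rewrite in_cons => /orP [/eqP -> | iL]; [apply: HDa | apply: HDr].
have [t Ht] := closed_nonrootP _ D0.
by exists t; apply: HD.
Qed.

Lemma rankE_t (k : fieldType) n m1 m2 (U : 'M[k]_(m1, n)) (W0 : 'M[k]_(m2, n)) (N : 'M[k]_n) t :
  \rank (U + W0 *m (1%:M + t *: N))%MS = \rank (col_mx U W0 + t *: col_mx 0 (W0 *m N))%R.
Proof.
rewrite (addsmxE _ _).1 mulmxDr mulmx1 -scalemxAr.
by rewrite scale_col_mx scaler0 add_col_mx addr0.
Qed.

Lemma sum_le (I : eqType) (L : seq I) (f h : I -> nat) :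
  (forall i, i \in L -> f i <= h i)%N -> (\sum_(i <- L) f i <= \sum_(i <- L) h i)%N.
Proof.
elim: L => [|a L IH] H; first by rewrite !big_nil.
rewrite !big_cons leq_add ?H ?mem_head //; apply: IH => i iL; apply: H; by rewrite in_cons iL orbT.
Qed.

Lemma sum_lt (I : eqType) (L : seq I) (f h : I -> nat) a : a \in L ->
  (forall i, i \in L -> f i <= h i)%N -> (f a < h a)%N ->
  (\sum_(i <- L) f i < \sum_(i <- L) h i)%N.
Proof.
elim: L => [|b L IH] //; rewrite in_cons => /orP [/eqP -> | aL] H fa.
  rewrite !big_cons; have := sum_le (L:=L) (f:=f) (h:=h).
  move=> /(_ (fun i iL => H i (mem_behead (s:=b :: L) iL))); lia.
rewrite !big_cons; have := IH aL (fun i iL => H i (mem_behead (s:=b :: L) iL)) fa.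
have := H b (mem_head _ _); lia.
Qed.

Lemma sum_bound (I : eqType) (L : seq I) (f : I -> nat) c :
  (forall i, f i <= c)%N -> (\sum_(i <- L) f i <= size L * c)%N.
Proof.
move=> H; elim: L => [|a L IH]; first by rewrite big_nil.
by rewrite big_cons /= mulSn leq_add.
Qed.

Lemma strict_step (k : fieldType) n m1 m2 (U : 'M[k]_(m1, n)) (W0 : 'M[k]_(m2, n))
  (x p q : 'rV[k]_n) : (x <= U :&: W0)%MS -> x *m p^T != 0 -> ~~ (q <= U + W0)%MS ->
  (\rank (U + W0)%MS < \rank (U + W0 *m (1%:M + p^T *m q))%MS)%N.
Proof.
move=> xUW xp qS.
set W1 := W0 *m (1%:M + p^T *m q).
have xU : (x <= U)%MS := submx_trans xUW (capmxSl _ _).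
have xW : (x <= W0)%MS := submx_trans xUW (capmxSr _ _).
have qW1 : (q <= U + W1)%MS.
  have h1 : (x *m (1%:M + p^T *m q) <= U + W1)%MS.
    case/submxP: xW => a ->; rewrite -mulmxA; apply: submx_trans (submxMl _ _) _.
    exact: addsmxSr.
  have h2 : ((x *m p^T) *m q <= U + W1)%MS.
    have -> : (x *m p^T) *m q = x *m (1%:M + p^T *m q) - x.
      by rewrite mulmxDr mulmx1 addrC addKr mulmxA.
    apply: subB_sub => //; exact: submx_trans xU (addsmxSl _ _).
  move: h2; rewrite [x *m p^T]mx11_scalar mul_scalar_mx => h2.
  have c0 : (x *m p^T) 0 0 != 0.
    by apply: contra xp => /eqP c0; rewrite [x *m p^T]mx11_scalar c0 raddf0.
  rewrite -[q](scale1r) -(mulVf c0) -scalerA; exact: scalemx_sub.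
have W0W1 : (W0 <= U + W1)%MS.
  have -> : W0 = W1 - (W0 *m p^T) *m q by rewrite /W1 mulmxDr mulmx1 mulmxA addrK.
  apply: subB_sub; first exact: addsmxSr.
  exact: submx_trans (submxMl _ _) qW1.
apply: leq_trans (_ : \rank ((U + W0) + q)%MS <= _)%N.
  apply: rank_ltmx; rewrite ltmxE addsmxSl /=.
  by apply: contra qS => H; apply: submx_trans H; exact: addsmxSr.
apply: mxrankS; rewrite !addsmx_sub qW1 W0W1 addsmxSl //.
Qed.

Definition phi {k : fieldType} {n} (L : seq ('M[k]_n * 'M[k]_n)) (g : 'M[k]_n) : nat :=
  \sum_(pr <- L) \rank (pr.1 + pr.2 *m g^T)%MS.

Definition goodb {k : fieldType} {n} (g : 'M[k]_n) (pr : 'M[k]_n * 'M[k]_n) : bool :=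
  (\rank (pr.1 :&: pr.2 *m g^T)%MS <= \rank pr.1 + \rank pr.2 - n)%N.

Lemma phi_bound (k : fieldType) n (L : seq ('M[k]_n * 'M[k]_n)) g : (phi L g <= size L * n)%N.
Proof. by apply: sum_bound => pr; exact: rank_leq_col. Qed.

Lemma improve (k : closedFieldType) n (G : 'M[k]_n -> Prop) (HG : SL_or_Sp G)
  (L : seq ('M[k]_n * 'M[k]_n)) g :
  G g -> ~~ all (goodb g) L -> exists g', G g' /\ (phi L g < phi L g')%N.
Proof.
have [G1 GM Gu Gt] := G_facts HG.
move=> Gg /allPn [[U W] prL bad].
set W0 := W *m g^T.
have rW0 : \rank W0 = \rank W by rewrite mxrankMfree // row_free_unit unitmx_tr Gu.
have sc := mxrank_sum_cap U W0.
have rU := rank_leq_col (U + W0)%MS.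
move: bad; rewrite /goodb /= -/W0 => bad.
have rS : (\rank (U + W0)%MS < n)%N by lia.
have cap0 : (U :&: W0)%MS != 0 by rewrite -mxrank_eq0; lia.
have [x xUW x0] := rowV0Pn cap0.
have xS : (x <= U + W0)%MS := submx_trans xUW (submx_trans (capmxSl _ _) (addsmxSl _ _)).
have [p [q [pq xp qS Gq]]] := Gt _ x x0 xS rS.
pose R (pr : 'M[k]_n * 'M[k]_n) t :=
  \rank (pr.1 + (pr.2 *m g^T) *m (1%:M + t *: (p^T *m q)))%MS.
have R0 : forall pr, R pr 0 = \rank (pr.1 + pr.2 *m g^T)%MS.
  by move=> pr; rewrite /R scale0r addr0 mulmx1.
have [t Ht] : exists t : k, forall pr, pr \in L -> (R pr 0%R <= R pr t)%N /\ (R pr 1%R <= R pr t)%N.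
  apply: poly_avoid => pr _.
  have [D0 [D00 H0]] := rank_lsc (col_mx pr.1 (pr.2 *m g^T)) (col_mx 0 (pr.2 *m g^T *m (p^T *m q))) 0.
  have [D1 [D10 H1]] := rank_lsc (col_mx pr.1 (pr.2 *m g^T)) (col_mx 0 (pr.2 *m g^T *m (p^T *m q))) 1.
  exists (D0 * D1); split; first by rewrite mulf_neq0.
  move=> s; rewrite hornerM mulf_eq0 negb_or => /andP [s0 s1].
  by rewrite /R !rankE_t; split; [apply: H0 | apply: H1].
exists ((1%:M + t *: (q^T *m p)) *m g); split; first by apply: GM.
have phiE : phi L ((1%:M + t *: (q^T *m p)) *m g) = \sum_(pr <- L) R pr t.
  apply: eq_bigr => pr _; rewrite /R trmx_mul [(_ + _)^T]linearD /= trmx1.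
  by rewrite [(_ *: _)^T]linearZ /= trmx_mul trmxK mulmxA.
rewrite phiE; apply: (sum_lt prL).
  by move=> pr prL'; rewrite -R0; case: (Ht pr prL').
rewrite -R0 /=; apply: leq_trans (proj2 (Ht _ prL)).
by rewrite /R /= scale1r scale0r addr0 mulmx1; apply: (strict_step xUW xp qS).
Qed.

Lemma step (k : closedFieldType) n (G : 'M[k]_n -> Prop) (HG : SL_or_Sp G)
  (L : seq ('M[k]_n * 'M[k]_n)) : exists g, G g /\ all (goodb g) L.
Proof.
have [G1 _ _ _] := G_facts HG.
suff: forall N g, G g -> (size L * n - phi L g <= N)%N -> exists g, G g /\ all (goodb g) L.
  by move=> /(_ _ 1%:M G1 (leqnn _)).
elim=> [|N IH] g Gg HN; (case: (boolP (all (goodb g) L)) => Hall; first by exists g);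
  have [g' [Gg' lt]] := improve HG Gg Hall; have := phi_bound L g'.
  move=> b; have b' : (phi L g' <= size L * n)%N by exact: b.
  exfalso; lia.
move=> b; have b' : (phi L g' <= size L * n)%N by exact: b.
apply: (IH g' Gg'); lia.
Qed.

Lemma rank_conj (k : fieldType) n (g M : 'M[k]_n) : g \in unitmx ->
  \rank (g *m M *m invmx g) = \rank M.
Proof.
move=> gu; rewrite mxrankMfree ?row_free_unit ?unitmx_inv //.
apply/eqP; rewrite eqn_leq mxrankM_maxr /=.
rewrite -{1}(mulKmx gu M); exact: mxrankM_maxr.
Qed.

Lemma conj_sub (k : fieldType) n (g x : 'M[k]_n) (l : k) : g \in unitmx ->
  g *m x *m invmx g - l%:M = g *m (x - l%:M) *m invmx g.
Proof.
by move=> gu; rewrite mulmxBr mulmxBl mul_mx_scalar -scalemxAl mulmxV // scalemx1.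
Qed.

Lemma rank_eig_tr (k : fieldType) n (x : 'M[k]_n) l :
  \rank (eigenspace x^T l) = eigdim x l.
Proof.
rewrite /eigenspace mxrank_ker /eigdim.
have -> : x^T - l%:M = (x - l%:M)^T by rewrite linearB /= tr_scalar_mx.
by rewrite mxrank_tr.
Qed.

Lemma bigcap_rank (k : fieldType) n e (E : 'I_e -> 'M[k]_n) :
  (\sum_(j < e) \rank (E j) + n <= \rank (\bigcap_(j < e) E j)%MS + e * n)%N.
Proof.
elim: e E => [|e IH] E.
  rewrite !big_ord0 mxrank1; lia.
rewrite big_ord_recr /= [(\bigcap_(j < e.+1) E j)%MS]big_ord_recr /=.
set A := (\bigcap_(i < e) _)%MS; set S := (\sum_(i < e) _)%N.
have h1 : (S + n <= \rank A + e * n)%N := IH _.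
have h2 := mxrank_sum_cap A (E ord_max).
have h3 := rank_leq_col (A + E ord_max)%MS.
rewrite mulSn; lia.
Qed.

Lemma easy_dir (k : closedFieldType) (n : nat) (G : 'M[k]_n -> Prop)
  (HG : SL_or_Sp G) (e : nat) (He : (1 <= e)%N)
  (x : 'I_e -> 'M[k]_n) 
  (gam : 'I_e -> nat) (Hgam : forall j, largest_eigdim (x j) (gam j)) :
  (exists y : 'I_e -> 'M[k]_n,
    (forall j, conj_in G (x j) (y j)) /\
    ~ (exists v : 'cV[k]_n, v != 0 /\ forall j, fixes_line (y j) v)) ->
  ((\sum_(j < e) gam j)%N <= n * (e - 1))%N.
Proof.
have [_ _ Gu _] := G_facts HG.
case=> y [Hy Hno]; rewrite leqNgt; apply/negP => Hlt.
have /fin_all_exists [lam Hlam] : forall j, exists l : k, eigdim (x j) l = gam j.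
  by move=> j; case: (Hgam j).
pose E j := eigenspace (y j)^T (lam j).
have rE : forall j, \rank (E j) = gam j.
  move=> j; rewrite /E rank_eig_tr -Hlam /eigdim.
  have [g [Gg ->]] := Hy j.
  by rewrite conj_sub ?Gu // rank_conj ?Gu.
have Hb := bigcap_rank E.
have sE : (\sum_(j < e) \rank (E j) = \sum_(j < e) gam j)%N by apply: eq_bigr => j _; exact: rE.
rewrite sE in Hb.
have ee : (n * (e - 1) + n = e * n)%N by rewrite subn1 -mulnSr prednK // mulnC.
have : (\bigcap_(j < e) E j)%MS != 0 by rewrite -mxrank_eq0; lia.
case/rowV0Pn => v /sub_bigcapmxP vE v0.
apply: Hno; exists v^T; split; first by rewrite trmx_eq0.
move=> j; exists (lam j).
have /eigenspaceP Hv := vE j isT.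
by rewrite -[y j]trmxK -trmx_mul Hv linearZ.
Qed.

Lemma hard_dir (k : closedFieldType) (n : nat) (G : 'M[k]_n -> Prop)
  (HG : SL_or_Sp G) (e : nat) (He : (1 <= e)%N)
  (x : 'I_e -> 'M[k]_n)
  (gam : 'I_e -> nat) (Hgam : forall j, largest_eigdim (x j) (gam j)) :
  ((\sum_(j < e) gam j)%N <= n * (e - 1))%N ->
  exists y : 'I_e -> 'M[k]_n,
    (forall j, conj_in G (x j) (y j)) /\
    ~ (exists v : 'cV[k]_n, v != 0 /\ forall j, fixes_line (y j) v).
Proof.
move=> Hsum.
have [G1 GM Gu Gt] := G_facts HG.
have gn : forall j, (gam j <= n)%N.
  by move=> j; case: (Hgam j) => [[l <-] _]; rewrite /eigdim leq_subr.
pose X j := (x j)^T.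
pose s j := sval (closed_field_poly_normal (char_poly (X j))).
have sP : forall j l, eigenvalue (X j) l -> l \in s j.
  move=> j l; rewrite eigenvalue_root_char /s; case: closed_field_poly_normal => r /= ->.
  by rewrite (monicP (char_poly_monic _)) scale1r root_prod_XsubC.
pose Es j := [seq eigenspace (X j) l | l <- s j].
pose c m := (\sum_(j < e) (if (j < m)%N then n - gam j else 0))%N.
have claim : forall m, (m <= e)%N -> exists g : 'I_e -> 'M[k]_n, (forall j, G (g j)) /\
   exists Fam : seq 'M[k]_n, (forall U, U \in Fam -> (\rank U <= n - c m)%N) /\
   forall v : 'rV[k]_n, v != 0 ->
     (forall j : 'I_e, (j < m)%N -> exists l, v *m (g j *m x j *m invmx (g j))^T = l *: v) ->
     has (fun U => v <= U)%MS Fam.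
  elim=> [|m IH] Hm.
    exists (fun _ => 1%:M); split => //; exists [:: 1%:M]; split.
      have c0 : c 0%N = 0%N by rewrite /c big1.
      by move=> U; rewrite inE => /eqP ->; rewrite mxrank1 c0 subn0.
    by move=> v _ _; rewrite /= submx1.
  have [g [Gg [Fam [HF HC]]]] := IH (ltnW Hm).
  pose j0 : 'I_e := Ordinal Hm.
  have cS : c m.+1 = (c m + (n - gam j0))%N.
    rewrite /c [in LHS](bigD1 j0) //= [in RHS](bigD1 j0) //= ltnSn ltnn add0n addnC.
    congr (_ + _)%N; apply: eq_bigr => j jne.
    move: jne; rewrite -val_eqE /= => jm.
    by rewrite ltnS leq_eqVlt (negbTE jm).
  pose L := [seq (U, W) | U <- Fam, W <- Es j0].
  have [g' [Gg' Hgood]] := step HG L.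
  have g'u := Gu _ Gg'.
  exists (fun j => if j == j0 then g' else g j); split; first by move=> j; case: ifP.
  exists [seq (pr.1 :&: pr.2 *m g'^T)%MS | pr <- L]; split.
    move=> U' /mapP [pr prL ->].
    have := allP Hgood pr prL; rewrite /goodb.
    case/allpairsP: prL => [[U W] [/= UF WE ->]] /= Hg.
    case/mapP: WE => l _ WE; subst W.
    have Hd : (\rank (eigenspace (X j0) l) <= gam j0)%N by rewrite rank_eig_tr; exact: ((Hgam j0).2 l).
    move: Hg Hd (HF U UF) (gn j0); rewrite cS.
    move: (\rank (eigenspace (X j0) l)) (\rank U) (c m) (gam j0) (\rank (U :&: eigenspace (X j0) l *m g'^T)%MS) => a b cc d r.
    lia.
  move=> v v0 Hv.
  have : has (fun U => v <= U)%MS Fam.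
    apply: HC => // j jm.
    have jne : (j == j0) = false by apply/negbTE; rewrite -val_eqE /=; move: jm; case: ltngtP.
    by have := Hv j (ltnW jm); rewrite jne.
  case/hasP => U UF vU.
  have [l Hl] := Hv j0 (ltnSn m); rewrite eqxx in Hl.
  set w := v *m (invmx g')^T.
  have g'Tu : g'^T \in unitmx by rewrite unitmx_tr.
  have vw : v = w *m g'^T by rewrite /w trmx_inv mulmxKV.
  have wX : w *m X j0 = l *: w.
    have := congr1 (fun M => M *m invmx g'^T) Hl; rewrite /= -scalemxAl.
    by rewrite !trmx_mul !mulmxA mulmxK // -trmx_inv.
  have w0 : w != 0 by apply: contra v0 => /eqP w0; rewrite vw w0 mul0mx.
  have ev : eigenvalue (X j0) l by apply/eigenvalueP; exists w.
  apply/hasP; exists (U :&: eigenspace (X j0) l *m g'^T)%MS.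
    apply/mapP; exists (U, eigenspace (X j0) l) => //.
    by apply/allpairsP; exists (U, eigenspace (X j0) l); split => //=; apply/mapP; exists l => //; apply: sP.
  rewrite sub_capmx vU /= vw submxMr //; exact/eigenspaceP.
have [g [Gg [Fam [HF HC]]]] := claim e (leqnn e).
have ce : (n <= c e)%N.
  have -> : c e = (\sum_(j < e) (n - gam j))%N by apply: eq_bigr => j _; rewrite ltn_ord.
  have h1 : (\sum_(j < e) (n - gam j) + \sum_(j < e) gam j = e * n)%N.
    rewrite -big_split /=.
    rewrite (eq_bigr (fun _ => n)) => [|j _]; last by rewrite subnK.
    by rewrite big_const_ord iter_addn_0 mulnC.
  have ee : (n * (e - 1) + n = e * n)%N by rewrite subn1 -mulnSr prednK // mulnC.
  move: h1 ee Hsum; move: (\sum_(j < e) (n - gam j))%N (\sum_(j < e) gam j)%N (n * (e - 1))%N (e * n)%N.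
  move=> a b c1 d; lia.
exists (fun j => g j *m x j *m invmx (g j)); split.
  by move=> j; exists (g j).
case=> v [v0 Hv].
have : has (fun U => v^T <= U)%MS Fam.
  apply: HC; first by rewrite trmx_eq0.
  move=> j _; case: (Hv j) => l Hl; exists l.
  by rewrite -trmx_mul Hl linearZ.
case/hasP => U UF vU.
have := HF U UF; have -> : (n - c e = 0)%N by apply/eqP; rewrite subn_eq0.
rewrite leqn0 mxrank_eq0 => /eqP U0.
by move: vU; rewrite U0 submx0 trmx_eq0 (negbTE v0).
Qed.

Unset Implicit Arguments. Set Strict Implicit.

Theorem lemma2p4 (k : closedFieldType) (n : nat) (G : 'M[k]_n -> Prop)
  (HG : SL_or_Sp G) (e : nat) (He : (1 <= e)%N)
  (x : 'I_e -> 'M[k]_n) (HxG : forall j, G (x j))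
  (gam : 'I_e -> nat) (Hgam : forall j, largest_eigdim (x j) (gam j)) :
  ((\sum_(j < e) gam j)%N <= n * (e - 1))%N <->
  exists y : 'I_e -> 'M[k]_n,
    (forall j, conj_in G (x j) (y j)) /\
    ~ (exists v : 'cV[k]_n, v != 0 /\ forall j, fixes_line (y j) v).
Proof.
split.
- exact: (hard_dir HG He Hgam).
- exact: (easy_dir HG He Hgam).
Qed.
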